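(* Let $C$ be a directed cycle on a finite vertex set, and for vertices $a,b$ let $c(a,b)$ be the number of edges of the directed path along $C$ from $a$ to $b$ ($c(a,a)=0$). Let $a_1,\dots,a_Q$ (sources) and $b_1,\dots,b_Q$ (sinks) be vertices of $C$ (repetitions allowed). The cost of a bijection $\sigma:[Q]\to[Q]$ (pairing $a_i$ with $b_{\sigma(i)}$) is $\sum_{i=1}^Q c(a_i,b_{\sigma(i)})$. Consider the algorithm GREEDY which, while unpaired elements remain, picks an arbitrary unpaired source $a_i$ and pairs it with an unpaired sink $b_j$ minimizing $c(a_i,b_j)$, or picks an arbitrary unpaired sink $b_j$ and pairs it with an unpaired source $a_i$ minimizing $c(a_i,b_j)$. Then every pairing produced by GREEDY has minimum cost among all bijections. *)

(* Defs.v *)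
From mathcomp Require Import all_boot all_order all_fingroup.
Set Implicit Arguments. Unset Strict Implicit. Unset Printing Implicit Defensive.

(* The directed cycle on vertex set 'I_n: edges v -> v+1 (mod n).
   cyc_dist n u v = number of edges of the directed path along the cycle
   from u to v (0 when u = v). *)
Definition cyc_dist (n : nat) (u v : 'I_n) : nat := (v + n - u) %% n.

Section Greedy.
Variables (n Q : nat) (a b : 'I_Q -> 'I_n).

Definition pairing_cost (sigma : 'S_Q) : nat :=
  \sum_(i < Q) cyc_dist (a i) (b (sigma i)).

(* Partial pairing state: p i = Some j means source a_i is paired with sink b_j. *)
Definition sink_unpaired (p : {ffun 'I_Q -> option 'I_Q}) (j : 'I_Q) : bool :=
  [forall i, p i != Some j].

Definition pair_up (p : {ffun 'I_Q -> option 'I_Q}) (i j : 'I_Q)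
  : {ffun 'I_Q -> option 'I_Q} :=
  [ffun k => if k == i then Some j else p k].

Inductive greedy_reach : {ffun 'I_Q -> option 'I_Q} -> Prop :=
  | greedy_start : greedy_reach [ffun => None]
  | greedy_src p i j :
      greedy_reach p -> p i = None -> sink_unpaired p j ->
      (forall j', sink_unpaired p j' ->
         cyc_dist (a i) (b j) <= cyc_dist (a i) (b j')) ->
      greedy_reach (pair_up p i j)
  | greedy_snk p i j :
      greedy_reach p -> p i = None -> sink_unpaired p j ->
      (forall i', p i' = None ->
         cyc_dist (a i) (b j) <= cyc_dist (a i') (b j)) ->
      greedy_reach (pair_up p i j).

Definition greedy_output (sigma : 'S_Q) : Prop :=
  greedy_reach [ffun i => Some (sigma i)].

End Greedy.

(* Main.v *)
Require Import Defs.
From mathcomp Require Import all_boot all_order all_fingroup.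
From mathcomp Require Import zify.

Lemma cd_eq n (u v : 'I_n) : cyc_dist u v = if u <= v then v - u else v + n - u.
Proof. rewrite /cyc_dist. have := ltn_ord u; have := ltn_ord v. case: ifP => h *.
 - rewrite -addnBAC // modnDr modn_small //; lia.
 - rewrite modn_small //; lia.
Qed.

Lemma quad_src n (x x' y y' : 'I_n) : cyc_dist x y <= cyc_dist x y' ->
  cyc_dist x y + cyc_dist x' y' <= cyc_dist x y' + cyc_dist x' y.
Proof.
rewrite !cd_eq. have := ltn_ord x; have := ltn_ord x'; have := ltn_ord y; have := ltn_ord y'.
case: ifP; case: ifP; case: ifP; case: ifP; move=> *; lia.
Qed.

Lemma quad_snk n (x x' y y' : 'I_n) : cyc_dist x y <= cyc_dist x' y ->
  cyc_dist x y + cyc_dist x' y' <= cyc_dist x' y + cyc_dist x y'.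
Proof.
rewrite !cd_eq. have := ltn_ord x; have := ltn_ord x'; have := ltn_ord y; have := ltn_ord y'.
case: ifP; case: ifP; case: ifP; case: ifP; move=> *; lia.
Qed.

Section Proof.
Variables (n Q : nat) (a b : 'I_Q -> 'I_n).
Local Notation c i j := (cyc_dist (a i) (b j)).

Lemma cost_swap (tau : 'S_Q) i i0 : i != i0 ->
  pairing_cost a b ((tperm i i0) * tau)%g + c i (tau i) + c i0 (tau i0) =
  pairing_cost a b tau + c i (tau i0) + c i0 (tau i).
Proof.
move=> ne. rewrite /pairing_cost.
rewrite (bigD1 i) // (bigD1 i0) // 1?eq_sym //.
set S := \sum_(k | _) _.
rewrite (bigD1 i) // (bigD1 i0) // 1?eq_sym //.
rewrite {}/S.
rewrite !(permM (tperm i i0) tau) tpermL tpermR.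
rewrite (eq_bigr (fun k => c k (tau k))); last first.
  move=> k /andP [k1 k2]; rewrite permM tpermD // eq_sym //.
rewrite /=; lia.
Qed.

Definition optimal (t : 'S_Q) := forall t', pairing_cost a b t <= pairing_cost a b t'.
Definition extends (p : {ffun 'I_Q -> option 'I_Q}) (t : 'S_Q) :=
  forall k j, p k = Some j -> t k = j.

Lemma swap_step p (tau : 'S_Q) i j : optimal tau -> extends p tau ->
  p i = None -> sink_unpaired p j ->
  (forall i0, p i0 = None -> forall j0, sink_unpaired p j0 -> tau i = j0 -> tau i0 = j ->
     i0 != i -> c i j + c i0 j0 <= c i j0 + c i0 j) ->
  exists t, optimal t /\ extends (pair_up p i j) t.
Proof.
move=> opt ext pi uj H.
have [eq|ne] := eqVneq (tau i) j.
  exists tau; split => // k j'; rewrite /pair_up ffunE; case: eqP => [->[<-]//|_]; exact: ext.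
set i0 := (tau^-1)%g j.
have ti0 : tau i0 = j by rewrite /i0 permKV.
have nei : i0 != i by apply/eqP => e; rewrite -e ti0 eqxx in ne.
have pi0 : p i0 = None.
  case E: (p i0) => [j''|] //. move: uj => /forallP /(_ i0); rewrite E.
  by rewrite (ext _ _ E) in ti0; rewrite ti0 eqxx.
have uj0 : sink_unpaired p (tau i).
  apply/forallP => k; apply/eqP => E. have := ext _ _ E => /perm_inj ek.
  by rewrite ek pi in E.
have Hq := H i0 pi0 (tau i) uj0 erefl ti0 nei.
exists ((tperm i i0) * tau)%g; split.
  move=> t'; have := @cost_swap tau i i0; rewrite eq_sym nei ti0 => /(_ isT) e.
  have := opt t'; move: e Hq; move: (pairing_cost a b _) (pairing_cost a b tau) (pairing_cost a b t') (c i j) (c i0 j) (c i (tau i)) (c i0 (tau i)) => x1 x2 x3 x4 x5 x6 x7; lia.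
move=> k j'; rewrite /pair_up ffunE permM; case: eqP => [->[<-]|/eqP nk E].
  by rewrite tpermL.
have nk0 : k != i0 by apply/eqP => e; rewrite e pi0 in E.
by rewrite tpermD 1?eq_sym //; apply: ext.
Qed.

Lemma invariant p : greedy_reach a b p -> exists t, optimal t /\ extends p t.
Proof.
elim => [|q i j _ [tau [opt ext]] pi uj mn|q i j _ [tau [opt ext]] pi uj mn].
- exists [arg min_(t < 1%g) pairing_cost a b t]; split.
    case: arg_minnP => // t _ h t'; exact: h.
  by move=> k j; rewrite ffunE.
- apply: (@swap_step _ _ _ _ opt ext pi uj) => i0 _ j0 uj0 _ _ _.
  apply: quad_src; exact: mn.
- apply: (@swap_step _ _ _ _ opt ext pi uj) => i0 pi0 j0 _ _ _ _.
  rewrite [X in _ <= X]addnC; apply: quad_snk; exact: mn.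
Qed.

End Proof.

Theorem mainTheorem9 (n Q : nat) (a b : 'I_Q -> 'I_n) (sigma : 'S_Q) :
  greedy_output a b sigma ->
  forall tau : 'S_Q, pairing_cost a b sigma <= pairing_cost a b tau.
Proof.
move=> /invariant [t [opt ext]] tau.
have -> : sigma = t by apply/permP => k; apply/esym/ext; rewrite ffunE.
exact: opt.
Qed.
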